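(* Let $G$ be a Garside group, $a\in G$, $a'\in C^{sum}(a)$, and let $\Gamma$ be the minimal summit graph of $a$. Let $p:\pi_1(\Gamma,a')\to G$ be the group homomorphism sending a loop based at $a'$, given as a sequence of arrows $\alpha_1^{\epsilon_1}\cdots\alpha_r^{\epsilon_r}$ ($\epsilon_j=\pm1$, an arrow traversed against its direction having exponent $-1$), to the element $s(\alpha_1)^{\epsilon_1}\cdots s(\alpha_r)^{\epsilon_r}\in G$, where $s(\alpha)$ is the label of $\alpha$. Then the image of $p$ is exactly the centralizer $Z(a')=\{c\in G: ca'=a'c\}$.
   Context: A Garside monoid $M$ is an atomic, left and right cancellative monoid with left and right lcm's and gcd's for all pairs, having a Garside element $\Delta$ whose left divisors coincide with its right divisors, form a finite set and generate $M$; $G$ is its group of fractions, containing $M$. Prefix order on $G$: $a\preceq b$ iff $a^{-1}b\in M$. Simple elements are the divisors of $\Delta$ in $M$; $S$ is the set of simple elements. For $x\in G$, $\inf(x)=\max\{r:\Delta^r\preceq x\}$, $\sup(x)=\min\{r: x\preceq\Delta^r\}$. The summit class $C^{sum}(a)$ is the (finite, nonempty) set of conjugates of $a$ with maximal $\inf$ and minimal $\sup$ among all conjugates of $a$. For $v\in C^{sum}(a)$, $S^{sum}_v$ is the set of $\preceq$-minimal elements of $\{s\in S\setminus\{1\}: s^{-1}vs\in C^{sum}(a)\}$. The minimal summit graph $\Gamma$ of $a$ is the finite directed graph whose vertices are the elements of $C^{sum}(a)$, with an arrow from $v$ to $w$ labelled $s$ for each $s\in S^{sum}_v$ such that $s^{-1}vs=w$.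 The fundamental group $\pi_1(\Gamma,a')$ is that of the underlying (undirected) graph. *)

(* Defs.v *)
From Stdlib Require Import ZArith List.
Import ListNotations.
Open Scope Z_scope.

Record group := Group {
  carrier :> Type;
  gmul : carrier -> carrier -> carrier;
  gone : carrier;
  ginv : carrier -> carrier;
  gmulA : forall x y z, gmul x (gmul y z) = gmul (gmul x y) z;
  gmul1l : forall x, gmul gone x = x;
  gmul1r : forall x, gmul x gone = x;
  gmulVl : forall x, gmul (ginv x) x = gone;
  gmulVr : forall x, gmul x (ginv x) = gone
}.

Arguments gmul {g}.
Arguments gone {g}.
Arguments ginv {g}.

Section GarsideDefs.
Variable G : group.
Variable M : G -> Prop.
Variable Delta : G.

Definition gprod (l : list G) : G := fold_right gmul gone l.

Fixpoint gpow (g : G) (n : nat) : G :=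
  match n with O => gone | S n' => gmul g (gpow g n') end.
Definition gzpow (g : G) (z : Z) : G :=
  match z with
  | Z0 => gone
  | Zpos p => gpow g (Pos.to_nat p)
  | Zneg p => ginv (gpow g (Pos.to_nat p))
  end.

Definition ldivM (x y : G) : Prop := exists c, M c /\ y = gmul x c.
Definition rdivM (x y : G) : Prop := exists c, M c /\ y = gmul c x.

(** Cancellativity is automatic since M lies in a group. *)
Definition is_garside : Prop :=
  M gone /\ (forall x y, M x -> M y -> M (gmul x y)) /\
  (forall g : G, exists x y, M x /\ M y /\ g = gmul x (ginv y)) /\
  (forall x, M x -> exists N : nat, forall l : list G,
      (forall y, In y l -> M y /\ y <> gone) -> gprod l = x -> (length l <= N)%nat) /\
  (forall x y, M x -> M y -> exists m, M m /\ ldivM x m /\ ldivM y m /\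
      forall n, M n -> ldivM x n -> ldivM y n -> ldivM m n) /\
  (forall x y, M x -> M y -> exists d, M d /\ ldivM d x /\ ldivM d y /\
      forall n, M n -> ldivM n x -> ldivM n y -> ldivM n d) /\
  (forall x y, M x -> M y -> exists m, M m /\ rdivM x m /\ rdivM y m /\
      forall n, M n -> rdivM x n -> rdivM y n -> rdivM m n) /\
  (forall x y, M x -> M y -> exists d, M d /\ rdivM d x /\ rdivM d y /\
      forall n, M n -> rdivM n x -> rdivM n y -> rdivM n d) /\
  M Delta /\
  (forall x, M x -> (ldivM x Delta <-> rdivM x Delta)) /\
  (exists L : list G, forall x, M x -> ldivM x Delta -> In x L) /\
  (forall x, M x -> exists l : list G,
      (forall y, In y l -> M y /\ ldivM y Delta) /\ x = gprod l).

Definition prec (x y : G) : Prop := M (gmul (ginv x) y).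

Definition is_inf (x : G) (r : Z) : Prop :=
  prec (gzpow Delta r) x /\ forall r', prec (gzpow Delta r') x -> r' <= r.
Definition is_sup (x : G) (r : Z) : Prop :=
  prec x (gzpow Delta r) /\ forall r', prec x (gzpow Delta r') -> r <= r'.

Definition gconj (c x : G) : G := gmul (gmul (ginv c) x) c.
Definition conjugate (a v : G) : Prop := exists c, v = gconj c a.

Definition Csum (a v : G) : Prop :=
  conjugate a v /\
  (exists rv, is_inf v rv /\
     forall w rw, conjugate a w -> is_inf w rw -> rw <= rv) /\
  (exists sv, is_sup v sv /\
     forall w sw, conjugate a w -> is_sup w sw -> sv <= sw).

Definition simple (s : G) : Prop := M s /\ prec s Delta.

Definition Ssum_cand (a v s : G) : Prop :=
  simple s /\ s <> gone /\ Csum a (gconj s v).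
Definition Ssum (a v s : G) : Prop :=
  Ssum_cand a v s /\ forall t, Ssum_cand a v t -> prec t s -> t = s.

(** minimal summit graph: vertices Csum a; one arrow v -> s^-1 v s labelled s
    for each s in Ssum a v.  An arrow is thus identified with the pair (v,s). *)
Definition arrow (a v s : G) : Prop := Csum a v /\ Ssum a v s.

(** walks in the underlying undirected graph: a list of (v, s, eps), where
    (v,s) is an arrow and eps = true means it is traversed forwards
    (from v to s^-1 v s), eps = false backwards. *)
Fixpoint walk (a x : G) (l : list (G * G * bool)) (y : G) : Prop :=
  match l with
  | [] => x = y
  | (v, s, eps) :: l' =>
      arrow a v s /\
      if eps then x = v /\ walk a (gconj s v) l' y
      else x = gconj s v /\ walk a v l' y
  end.

Definition label_prod (l : list (G * G * bool)) : G :=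
  fold_right (fun (e : G * G * bool) (acc : G) => match e with
                           | (v, s, eps) => gmul (if eps then s else ginv s) acc
                           end) gone l.

Definition image_p (a a' c : G) : Prop :=
  exists l, walk a a' l a' /\ c = label_prod l.

Definition centralizer (a' c : G) : Prop := gmul c a' = gmul a' c.

End GarsideDefs.

(* Main.v *)
Require Import Defs.
From Stdlib Require Import ZArith List Lia Classical.
Import ListNotations.

Arguments gmulA {g}. Arguments gmul1l {g}. Arguments gmul1r {g}. Arguments gmulVl {g}. Arguments gmulVr {g}.
Section GroupBasics.
Variable G : group.
Local Infix "**" := (@gmul G) (at level 40, left associativity).

Lemma gmulKl (x y : G) : ginv x ** (x ** y) = y.
Proof. rewrite gmulA, gmulVl, gmul1l. reflexivity. Qed.
Lemma gmulKr (x y : G) : x ** (ginv x ** y) = y.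
Proof. rewrite gmulA, gmulVr, gmul1l. reflexivity. Qed.
Lemma ginv_unique (x y : G) : x ** y = gone -> y = ginv x.
Proof. intro H. rewrite <- (gmulKl x y), H, gmul1r. reflexivity. Qed.
Lemma ginv_mul (x y : G) : ginv (x ** y) = ginv y ** ginv x.
Proof. symmetry. apply ginv_unique. rewrite <- gmulA, (gmulA y), gmulVr, gmul1l, gmulVr. reflexivity. Qed.
Lemma ginv_ginv (x : G) : ginv (ginv x) = x.
Proof. symmetry. apply ginv_unique. apply gmulVl. Qed.
Lemma ginv_one : ginv (@gone G) = gone.
Proof. symmetry. apply ginv_unique. apply gmul1l. Qed.
Lemma gcancel (x y z : G) : x ** y = x ** z -> y = z.
Proof. intro H. rewrite <- (gmulKl x y), H, gmulKl. reflexivity. Qed.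
Lemma gmulVl' (x y : G) : (y ** ginv x) ** x = y.
Proof. rewrite <- gmulA, gmulVl, gmul1r. reflexivity. Qed.
Lemma gmulVr' (x y : G) : (y ** x) ** ginv x = y.
Proof. rewrite <- gmulA, gmulVr, gmul1r. reflexivity. Qed.

Lemma gpow_add (g : G) m n : gpow G g (m + n) = gpow G g m ** gpow G g n.
Proof. induction m; simpl. - rewrite gmul1l; reflexivity. - rewrite IHm, gmulA. reflexivity. Qed.
Lemma gpow_comm (g : G) m n : gpow G g m ** gpow G g n = gpow G g n ** gpow G g m.
Proof. rewrite <- !gpow_add. f_equal. lia. Qed.

Lemma comm_inv_r (x y : G) : x ** y = y ** x -> x ** ginv y = ginv y ** x.
Proof. intro H. apply (gcancel y). rewrite gmulKr, gmulA, <- H, gmulVr'. reflexivity. Qed.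
Lemma comm_inv_l (x y : G) : x ** y = y ** x -> ginv x ** y = y ** ginv x.
Proof. intro H. symmetry. apply comm_inv_r. symmetry. exact H. Qed.
End GroupBasics.

Ltac gnorm := unfold gconj in *; repeat (progress rewrite ?ginv_mul, ?ginv_ginv, ?ginv_one,
  ?gmul1l, ?gmul1r, <- ?gmulA, ?gmulKl, ?gmulKr, ?gmulVl, ?gmulVr).
Arguments gmulKl {G}. Arguments gmulKr {G}. Arguments ginv_unique {G}. Arguments ginv_mul {G}.
Arguments ginv_ginv {G}. Arguments ginv_one {G}. Arguments gcancel {G}. Arguments gmulVl' {G}.
Arguments gmulVr' {G}. Arguments gpow_add {G}. Arguments gpow_comm {G}. Arguments comm_inv_r {G}. Arguments comm_inv_l {G}.

Section Garside.
Variable G : group.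
Variable M : G -> Prop.
Variable Delta : G.
Local Infix "**" := (@gmul G) (at level 40, left associativity).
Local Notation P := (prec G M).
Local Notation Dz := (gzpow G Delta).
Local Notation Pw := (gpow G Delta).

Hypothesis HM1 : M gone.
Hypothesis HMmul : forall x y, M x -> M y -> M (x ** y).
Hypothesis Hfrac : forall g : G, exists x y, M x /\ M y /\ g = x ** ginv y.
Hypothesis Hatom : forall x, M x -> exists N : nat, forall l : list G,
      (forall y, In y l -> M y /\ y <> gone) -> gprod G l = x -> (length l <= N)%nat.
Hypothesis Hgcd : forall x y, M x -> M y -> exists d, M d /\ ldivM G M d x /\ ldivM G M d y /\
      forall n, M n -> ldivM G M n x -> ldivM G M n y -> ldivM G M n d.
Hypothesis HD : M Delta.
Hypothesis Hlr : forall x, M x -> (ldivM G M x Delta <-> rdivM G M x Delta).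
Hypothesis HL : exists L : list G, forall x, M x -> ldivM G M x Delta -> In x L.
Hypothesis Hgen : forall x, M x -> exists l : list G,
      (forall y, In y l -> M y /\ ldivM G M y Delta) /\ x = gprod G l.

Lemma prec_refl x : P x x.
Proof. unfold prec. rewrite gmulVl. exact HM1. Qed.
Lemma prec_trans x y z : P x y -> P y z -> P x z.
Proof. unfold prec; intros H1 H2.
  replace (ginv x ** z) with ((ginv x ** y) ** (ginv y ** z)) by (gnorm; reflexivity).
  auto. Qed.
Lemma ldiv_prec x y : ldivM G M x y <-> P x y.
Proof. unfold ldivM, prec; split.
  - intros [c [Hc ->]]. rewrite gmulKl. exact Hc.
  - intro H. exists (ginv x ** y). split; [exact H | rewrite gmulKr; reflexivity]. Qed.

Fixpoint pairs (x : G) (n : nat) : list G :=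
  match n with O => [] | S n => x :: ginv x :: pairs x n end.

Lemma unit_triv x : M x -> M (ginv x) -> x = gone.
Proof. intros Hx Hix. apply NNPP; intro Hne.
  destruct (Hatom gone HM1) as [N HN].
  assert (Hl : forall n, gprod G (pairs x n) = gone /\ length (pairs x n) = (2 * n)%nat /\
     forall y, In y (pairs x n) -> M y /\ y <> gone).
  { induction n as [|n [IH1 [IH2 IH3]]]; simpl.
    - split; [reflexivity | split; [reflexivity | tauto]].
    - rewrite IH1, gmul1r, gmulVr. split; [reflexivity|]. split; [lia|].
      intros y [<-|[<-|Hy]]; auto. split; auto. intro E. apply Hne.
      rewrite <- (ginv_ginv x), E, ginv_one. reflexivity. }
  destruct (Hl (S N)) as [A [B C]]. specialize (HN _ C A). lia. Qed.

Lemma prec_antisym x y : P x y -> P y x -> x = y.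
Proof. unfold prec; intros H1 H2.
  assert (E : ginv x ** y = gone).
  { apply unit_triv; auto. rewrite ginv_mul, ginv_ginv. exact H2. }
  rewrite <- (gmulKr x y), E, gmul1r. reflexivity. Qed.

Lemma simple_tau1 s : M s -> ldivM G M s Delta -> M (ginv Delta ** s ** Delta).
Proof. intros Hs Hsd. destruct Hsd as [t [Ht Et]].
  assert (Hr : rdivM G M t Delta) by (exists s; auto).
  apply (Hlr t Ht) in Hr. destruct Hr as [u [Hu Eu]].
  replace (ginv Delta ** s ** Delta) with u; auto.
  rewrite Eu at 2. rewrite Et. gnorm. reflexivity. Qed.

Lemma simple_tau2 s : M s -> ldivM G M s Delta -> M (Delta ** s ** ginv Delta).
Proof. intros Hs Hsd. apply (Hlr s Hs) in Hsd. destruct Hsd as [t [Ht Et]].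
  assert (Hr : ldivM G M t Delta) by (exists s; auto).
  apply (Hlr t Ht) in Hr. destruct Hr as [u [Hu Eu]].
  replace (Delta ** s ** ginv Delta) with u; auto.
  rewrite Eu at 1. rewrite Et. gnorm. reflexivity. Qed.

Lemma M_gprod l : (forall y, In y l -> M y /\ ldivM G M y Delta) -> M (gprod G l).
Proof. induction l; simpl; intros H; auto.
  apply HMmul; [apply H; auto | apply IHl; auto]. Qed.

Lemma tau1 y : M y -> M (ginv Delta ** y ** Delta).
Proof. intro Hy. destruct (Hgen y Hy) as [l [Hl ->]]. clear Hy.
  induction l; simpl.
  - rewrite gmul1r, gmulVl. exact HM1.
  - replace (ginv Delta ** (a ** gprod G l) ** Delta) with
      ((ginv Delta ** a ** Delta) ** (ginv Delta ** gprod G l ** Delta)) by (gnorm; reflexivity).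
    apply HMmul. apply simple_tau1; apply Hl; simpl; auto. apply IHl; intros; apply Hl; simpl; auto. Qed.

Lemma tau2 y : M y -> M (Delta ** y ** ginv Delta).
Proof. intro Hy. destruct (Hgen y Hy) as [l [Hl ->]]. clear Hy.
  induction l; simpl.
  - rewrite gmul1r, gmulVr. exact HM1.
  - replace (Delta ** (a ** gprod G l) ** ginv Delta) with
      ((Delta ** a ** ginv Delta) ** (Delta ** gprod G l ** ginv Delta)) by (gnorm; reflexivity).
    apply HMmul. apply simple_tau2; apply Hl; simpl; auto. apply IHl; intros; apply Hl; simpl; auto. Qed.

Lemma M_gpow n : M (Pw n).
Proof. induction n; simpl; auto. Qed.

Lemma conj_pos n : forall y, M y -> M (ginv (Pw n) ** y ** Pw n).
Proof. induction n; simpl; intros y Hy.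
  - rewrite ginv_one, gmul1l, gmul1r. exact Hy.
  - replace (ginv (Delta ** Pw n) ** y ** (Delta ** Pw n)) with
      (ginv (Pw n) ** (ginv Delta ** y ** Delta) ** Pw n) by (gnorm; reflexivity).
    apply IHn, tau1, Hy. Qed.

Lemma conj_neg n : forall y, M y -> M (Pw n ** y ** ginv (Pw n)).
Proof. induction n; simpl; intros y Hy.
  - rewrite ginv_one, gmul1l, gmul1r. exact Hy.
  - replace (Delta ** Pw n ** y ** ginv (Delta ** Pw n)) with
      (Delta ** (Pw n ** y ** ginv (Pw n)) ** ginv Delta) by (gnorm; reflexivity).
    apply tau2, IHn, Hy. Qed.

Lemma conj_z1 z y : M y -> M (ginv (Dz z) ** y ** Dz z).
Proof. intro Hy. destruct z; simpl.
  - rewrite ginv_one, gmul1l, gmul1r. exact Hy.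
  - apply conj_pos, Hy.
  - rewrite ginv_ginv. apply conj_neg, Hy. Qed.

Lemma conj_z2 z y : M y -> M (Dz z ** y ** ginv (Dz z)).
Proof. intro Hy. destruct z; simpl.
  - rewrite ginv_one, gmul1l, gmul1r. exact Hy.
  - apply conj_neg, Hy.
  - rewrite ginv_ginv. apply conj_pos, Hy. Qed.

Lemma Dz_comm_pow z k : Dz z ** Pw k = Pw k ** Dz z.
Proof. destruct z; simpl.
  - rewrite gmul1l, gmul1r; reflexivity.
  - apply gpow_comm.
  - apply comm_inv_l, gpow_comm. Qed.

Lemma Dz_comm_D z : Delta ** Dz z = Dz z ** Delta.
Proof. pose proof (Dz_comm_pow z 1) as H. simpl in H. rewrite gmul1r in H. symmetry; exact H. Qed.

Lemma decomp g : exists k u, M u /\ g = ginv (Pw k) ** u.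
Proof.
  assert (Hsub : forall l, (forall y, In y l -> M y /\ ldivM G M y Delta) ->
            M (ginv (gprod G l) ** Pw (length l))).
  { induction l as [|s l IH]; simpl; intros Hl.
    - rewrite ginv_one, gmul1l. exact HM1.
    - destruct (Hl s (or_introl eq_refl)) as [Hs [t [Ht Et]]].
      set (Pk := Pw (length l)). set (p := gprod G l).
      assert (E : ginv (s ** p) ** (Delta ** Pk) = (ginv p ** Pk) ** (ginv Pk ** t ** Pk)).
      { rewrite Et. gnorm. reflexivity. }
      rewrite E. apply HMmul. apply IH; intros; apply Hl; auto. apply conj_pos, Ht. }
  destruct (Hfrac g) as [x [y [Hx [Hy ->]]]].
  destruct (Hgen y Hy) as [l [Hl Ey]].
  exists (length l), (Pw (length l) ** (x ** (ginv y ** Pw (length l))) ** ginv (Pw (length l))).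
  split.
  - apply conj_neg. apply HMmul; auto. rewrite Ey. apply Hsub, Hl.
  - set (Pk := Pw (length l)). gnorm. reflexivity. Qed.

Lemma gpow_one n : gpow G gone n = gone.
Proof. induction n; simpl; auto. rewrite IHn, gmul1l; auto. Qed.

Lemma Delta_nontriv v r : is_inf G M Delta v r -> Delta <> gone.
Proof. intros [H1 H2] E. assert (Hz : forall z, Dz z = gone).
  { intro z; destruct z; simpl; rewrite ?E, ?gpow_one, ?ginv_one; reflexivity. }
  assert (r + 1 <= r)%Z; [|lia]. apply H2. rewrite Hz. rewrite Hz in H1. exact H1. Qed.

Lemma no_neg k : Delta <> gone -> M (ginv (Pw (S k))) -> False.
Proof. intros Hnt H. assert (E : Pw (S k) = gone) by (apply unit_triv; auto using M_gpow).
  simpl in E. apply ginv_unique in E.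
  apply Hnt. apply unit_triv; auto. rewrite <- E. apply M_gpow. Qed.

Lemma gzpow_cases z : (exists n, z = Z.of_nat n /\ Dz z = Pw n) \/
                      (exists n, z = (- Z.of_nat n)%Z /\ Dz z = ginv (Pw n)).
Proof. destruct z.
  - left. exists 0%nat. split; reflexivity.
  - left. exists (Pos.to_nat p). split; [rewrite positive_nat_Z|]; reflexivity.
  - right. exists (Pos.to_nat p). split; [rewrite positive_nat_Z|]; reflexivity. Qed.

Lemma pow_bound r s : Delta <> gone -> P (Dz r) (Dz s) -> (r <= s)%Z.
Proof. intros Hnt H. unfold prec in H.
  destruct (gzpow_cases r) as [[m [Er Dr]]|[m [Er Dr]]];
  destruct (gzpow_cases s) as [[n [Es Ds]]|[n [Es Ds]]]; rewrite Dr, Ds in H; subst r s.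
  - destruct (le_lt_dec m n) as [Hle|Hlt]; [lia|]. exfalso.
    replace m with (n + S (m - n - 1))%nat in H by lia.
    rewrite gpow_add, ginv_mul, <- gmulA, gmulVl, gmul1r in H.
    exact (no_neg _ Hnt H).
  - destruct (n + m)%nat eqn:Enm; [lia|]. exfalso.
    rewrite <- ginv_mul, <- gpow_add, Enm in H. exact (no_neg _ Hnt H).
  - lia.
  - destruct (le_lt_dec n m) as [Hle|Hlt]; [lia|]. exfalso.
    replace n with (m + S (n - m - 1))%nat in H by lia.
    rewrite ginv_ginv in H. apply (conj_pos m) in H.
    rewrite gpow_add in H. apply (no_neg (n - m - 1) Hnt).
    revert H. set (Q := Pw (S (n - m - 1))). gnorm. auto. Qed.

Lemma max_exists (Pr : Z -> Prop) a b : Pr a -> (forall r, Pr r -> (r <= b)%Z) ->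
  exists m, Pr m /\ forall r, Pr r -> (r <= m)%Z.
Proof. intros Ha Hb.
  assert (H : forall k a, (b - a <= Z.of_nat k)%Z -> Pr a -> exists m, Pr m /\ forall r, Pr r -> (r <= m)%Z).
  { induction k; intros a0 Hk Ha0.
    - exists a0. split; auto. intros r Hr. specialize (Hb r Hr). lia.
    - destruct (classic (exists r, Pr r /\ (a0 < r)%Z)) as [[r [Hr Hlt]]|Hno].
      + apply (IHk r); auto. lia.
      + exists a0. split; auto. intros r Hr. destruct (Z_le_gt_dec r a0); auto.
        exfalso. apply Hno. exists r. split; auto. lia. }
  apply (H (Z.to_nat (b - a)) a); auto. lia. Qed.

Lemma min_exists (Q : Z -> Prop) a b : Q a -> (forall r, Q r -> (b <= r)%Z) ->
  exists m, Q m /\ forall r, Q r -> (m <= r)%Z.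
Proof. intros Ha Hb.
  destruct (max_exists (fun r => Q (- r)%Z) (- a) (- b)) as [m [Hm Hmax]].
  - rewrite Z.opp_involutive; auto.
  - intros r Hr. specialize (Hb _ Hr). lia.
  - exists (- m)%Z. split; auto. intros r Hr. specialize (Hmax (- r)%Z).
    rewrite Z.opp_involutive in Hmax. specialize (Hmax Hr). lia. Qed.


Lemma min_in_list (l : list G) (C : G -> Prop) : (forall t, C t -> In t l) -> (exists t, C t) ->
  exists t, C t /\ forall t', C t' -> P t' t -> t' = t.
Proof. revert C. induction l as [|h l IH]; intros C Hin Hne.
  - destruct Hne as [t Ht]. destruct (Hin t Ht).
  - destruct (classic (C h /\ forall t', C t' -> P t' h -> t' = h)) as [Hmin|Hnmin].
    + exists h; exact Hmin.
    + destruct (classic (exists t, C t /\ t <> h)) as [Hne'|Hno].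
      * destruct (IH (fun t => C t /\ t <> h)) as [t [[Ct Nth] Hmt]].
        { intros t [Ct Nth]. destruct (Hin t Ct); [congruence|auto]. }
        { exact Hne'. }
        exists t. split; auto. intros t' Ct' Hp.
        destruct (classic (t' = h)) as [->|Nt'h]; [|apply Hmt; auto].
        exfalso. apply Hnmin. split; auto. intros t'' Ct'' Hp''.
        apply NNPP; intro N''.
        assert (t'' = t) by (apply Hmt; [split; auto | eapply prec_trans; eauto]).
        subst t''. apply Nth. apply prec_antisym; auto.
      * destruct Hne as [t Ct].
        assert (t = h) by (apply NNPP; intro; apply Hno; exists t; auto). subst t.
        exfalso. apply Hnmin. split; auto. intros t' Ct' _.
        apply NNPP; intro; apply Hno; exists t'; auto. Qed.

Lemma conj_trans a v h : conjugate G a v -> conjugate G a (gconj G h v).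
Proof. intros [c ->]. exists (c ** h). gnorm. reflexivity. Qed.

Section Intro.
Variables (a : G) (rv sv : Z).
Hypothesis Hnt : Delta <> gone.
Hypothesis Hrmax : forall w rw, conjugate G a w -> is_inf G M Delta w rw -> (rw <= rv)%Z.
Hypothesis Hsmin : forall w sw, conjugate G a w -> is_sup G M Delta w sw -> (sv <= sw)%Z.

Lemma Csum_intro w : conjugate G a w -> P (Dz rv) w -> P w (Dz sv) -> Csum G M Delta a w.
Proof. intros Hc Hi Hs. split; [exact Hc|split].
  - exists rv. split; [|exact Hrmax]. split; [exact Hi|].
    intros r' Hr'. destruct (Z_le_gt_dec r' rv) as [|Hgt]; auto. exfalso.
    destruct (max_exists (fun r => P (Dz r) w) r' sv) as [m [Hm Hmax]]; auto.
    { intros r Hr. apply pow_bound; auto. eapply prec_trans; eauto. }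
    assert (m <= rv)%Z by (apply (Hrmax w m); auto; split; auto).
    specialize (Hmax r' Hr'). lia.
  - exists sv. split; [|exact Hsmin]. split; [exact Hs|].
    intros s' Hs'. destruct (Z_le_gt_dec sv s') as [|Hgt]; auto. exfalso.
    destruct (min_exists (fun s => P w (Dz s)) s' rv) as [m [Hm Hmin]]; auto.
    { intros s Hs0. apply pow_bound; auto. eapply prec_trans; eauto. }
    assert (sv <= m)%Z by (apply (Hsmin w m); auto; split; auto).
    specialize (Hmin s' Hs'). lia. Qed.
End Intro.

Lemma Csum_conj_h a v h : (forall z, h ** Dz z = Dz z ** h) ->
  (forall y, M y -> M (ginv h ** y ** h)) -> Csum G M Delta a v -> Csum G M Delta a (gconj G h v).
Proof. intros Hcomm HMh [Hc [[rv [Hinf Hrmax]] [sv [Hsup Hsmin]]]].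
  pose proof (Delta_nontriv _ _ Hinf) as Hnt.
  apply (Csum_intro a rv sv Hnt Hrmax Hsmin).
  - apply conj_trans; auto.
  - destruct Hinf as [Hi _]. unfold prec in *.
    assert (C : ginv (Dz rv) ** ginv h = ginv h ** ginv (Dz rv)).
    { rewrite <- !ginv_mul, Hcomm. reflexivity. }
    replace (ginv (Dz rv) ** gconj G h v) with (ginv h ** (ginv (Dz rv) ** v) ** h); auto.
    transitivity ((ginv h ** ginv (Dz rv)) ** v ** h); [gnorm; reflexivity|].
    rewrite <- C. gnorm. reflexivity.
  - destruct Hsup as [Hs _]. unfold prec in *.
    replace (ginv (gconj G h v) ** Dz sv) with (ginv h ** (ginv v ** Dz sv) ** h); auto.
    transitivity (ginv h ** ginv v ** (Dz sv ** h)); [gnorm; reflexivity|].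
    rewrite <- Hcomm. gnorm. reflexivity. Qed.

Lemma Csum_tau a v : Csum G M Delta a v -> Csum G M Delta a (gconj G Delta v).
Proof. apply Csum_conj_h. intro z. apply Dz_comm_D. exact tau1. Qed.

Lemma Csum_conjD a v k : Csum G M Delta a v -> Csum G M Delta a (gconj G (ginv (Pw k)) v).
Proof. apply Csum_conj_h.
  - intro z. apply comm_inv_l. symmetry. apply Dz_comm_pow.
  - intros y Hy. rewrite ginv_ginv. apply conj_neg, Hy. Qed.

Lemma Csum_same_inf a v w rv : Csum G M Delta a v -> Csum G M Delta a w ->
  is_inf G M Delta v rv -> P (Dz rv) w.
Proof. intros [Hcv [[rv' [Hiv Hmv]] _]] [Hcw [[rw [Hiw Hmw]] _]] Hi.
  assert (rv = rv') by (apply Z.le_antisymm; [apply Hiv, Hi | apply Hi, Hiv]). subst rv'.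
  assert (rw <= rv)%Z by (apply (Hmv w); auto).
  assert (rv <= rw)%Z by (apply (Hmw v); auto).
  assert (rv = rw) by lia. subst rw. apply Hiw. Qed.

Lemma Csum_same_sup a v w sv : Csum G M Delta a v -> Csum G M Delta a w ->
  is_sup G M Delta v sv -> P w (Dz sv).
Proof. intros [Hcv [_ [sv' [Hsv Hmv]]]] [Hcw [_ [sw [Hsw Hmw]]]] Hs.
  assert (sv = sv') by (apply Z.le_antisymm; [apply Hs, Hsv | apply Hsv, Hs]). subst sv'.
  assert (sv <= sw)%Z by (apply (Hmv w); auto).
  assert (sw <= sv)%Z by (apply (Hmw v); auto).
  assert (sv = sw) by lia. subst sw. apply Hsw. Qed.

Lemma meet x y d : M x -> M y -> M d -> ldivM G M d x -> ldivM G M d y ->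
  (forall n, M n -> ldivM G M n x -> ldivM G M n y -> ldivM G M n d) ->
  forall u, P u x -> P u y -> P u d.
Proof. intros Hx Hy Hd Hdx Hdy Hdu u Hux Huy.
  destruct (decomp u) as [k [u' [Hu' ->]]]. set (p := Pw k) in *.
  assert (Hp : M p) by apply M_gpow.
  assert (Hpx : P u' (p ** x)).
  { unfold prec in *. revert Hux. gnorm. auto. }
  assert (Hpy : P u' (p ** y)).
  { unfold prec in *. revert Huy. gnorm. auto. }
  destruct (Hgcd (p ** x) (p ** y)) as [g' [Hg' [Hg'x [Hg'y Hg'u]]]]; auto.
  assert (Hu'g : ldivM G M u' g') by (apply Hg'u; auto; apply ldiv_prec; auto).
  assert (Hpg : ldivM G M p g') by (apply Hg'u; auto; first [ now (exists x; auto) | now (exists y; auto) ]).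
  destruct Hpg as [e [He Eg]].
  assert (Hex : ldivM G M e x).
  { destruct Hg'x as [c [Hc Ec]]. exists c. split; auto. apply (gcancel p).
    rewrite Ec, Eg. gnorm. reflexivity. }
  assert (Hey : ldivM G M e y).
  { destruct Hg'y as [c [Hc Ec]]. exists c. split; auto. apply (gcancel p).
    rewrite Ec, Eg. gnorm. reflexivity. }
  destruct (Hdu e He Hex Hey) as [c2 [Hc2 Ed]].
  apply ldiv_prec in Hu'g. unfold prec in *.
  replace (ginv (ginv p ** u') ** d) with ((ginv u' ** g') ** c2).
  - apply HMmul; auto.
  - rewrite Ed, Eg. gnorm. reflexivity. Qed.

Lemma convex a v x d : Csum G M Delta a v -> Csum G M Delta a (gconj G x v) -> M x -> M d ->
  ldivM G M d x -> ldivM G M d Delta ->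
  (forall n, M n -> ldivM G M n x -> ldivM G M n Delta -> ldivM G M n d) ->
  Csum G M Delta a (gconj G d v).
Proof. intros Hv Hxv Hx Hd Hdx HdD Hdu.
  pose proof (Csum_tau a v Hv) as HDv.
  pose proof Hv as [Hc [[rv [Hinf Hrmax]] [sv [Hsup Hsmin]]]].
  pose proof (Delta_nontriv _ _ Hinf) as Hnt.
  apply ldiv_prec in Hdx as Pdx. apply ldiv_prec in HdD as PdD.
  unfold prec in Pdx, PdD.
  apply (Csum_intro a rv sv Hnt Hrmax Hsmin).
  - apply conj_trans; auto.
  - pose proof (Csum_same_inf a v _ rv Hv Hxv Hinf) as Bx.
    pose proof (Csum_same_inf a v _ rv Hv HDv Hinf) as BD.
    unfold prec in Bx, BD.
    assert (Hux : P (ginv v ** d ** Dz rv) x).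
    { unfold prec.
      replace (ginv (ginv v ** d ** Dz rv) ** x) with
        ((ginv (Dz rv) ** (ginv d ** x) ** Dz rv) ** (ginv (Dz rv) ** gconj G x v))
        by (gnorm; reflexivity).
      apply HMmul; [apply conj_z1|]; auto. }
    assert (HuD : P (ginv v ** d ** Dz rv) Delta).
    { unfold prec.
      replace (ginv (ginv v ** d ** Dz rv) ** Delta) with
        ((ginv (Dz rv) ** (ginv d ** Delta) ** Dz rv) ** (ginv (Dz rv) ** gconj G Delta v))
        by (gnorm; reflexivity).
      apply HMmul; [apply conj_z1|]; auto. }
    pose proof (meet x Delta d Hx HD Hd Hdx HdD Hdu _ Hux HuD) as Hm.
    unfold prec in *. revert Hm. gnorm. auto.
  - pose proof (Csum_same_sup a v _ sv Hv Hxv Hsup) as Bx.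
    pose proof (Csum_same_sup a v _ sv Hv HDv Hsup) as BD.
    unfold prec in Bx, BD.
    assert (Hux : P (v ** d ** ginv (Dz sv)) x).
    { unfold prec.
      replace (ginv (v ** d ** ginv (Dz sv)) ** x) with
        ((Dz sv ** (ginv d ** x) ** ginv (Dz sv)) ** (Dz sv ** (ginv (gconj G x v) ** Dz sv) ** ginv (Dz sv)))
        by (gnorm; reflexivity).
      apply HMmul; apply conj_z2; auto. }
    assert (HuD : P (v ** d ** ginv (Dz sv)) Delta).
    { unfold prec.
      replace (ginv (v ** d ** ginv (Dz sv)) ** Delta) with
        ((Dz sv ** (ginv d ** Delta) ** ginv (Dz sv)) ** (Dz sv ** (ginv (gconj G Delta v) ** Dz sv) ** ginv (Dz sv)))
        by (gnorm; reflexivity).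
      apply HMmul; apply conj_z2; auto. }
    pose proof (meet x Delta d Hx HD Hd Hdx HdD Hdu _ Hux HuD) as Hm.
    unfold prec in *. apply (conj_z1 sv) in Hm. revert Hm. gnorm. auto. Qed.

Lemma first_simple l : (forall y, In y l -> M y /\ ldivM G M y Delta) -> gprod G l <> gone ->
  exists s y, M s /\ ldivM G M s Delta /\ s <> gone /\ M y /\ gprod G l = s ** y.
Proof. induction l as [|h l IH]; simpl; intros Hl Hne.
  - congruence.
  - destruct (classic (h = gone)) as [->|Hh].
    + rewrite gmul1l in *. apply IH; auto.
    + exists h, (gprod G l). destruct (Hl h) as [A B]; auto.
      repeat split; auto. apply M_gprod. intros; apply Hl; auto. Qed.

Lemma PL a : forall n x v, M x ->
  (forall l, (forall y, In y l -> M y /\ y <> gone) -> gprod G l = x -> (length l <= n)%nat) ->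
  Csum G M Delta a v -> Csum G M Delta a (gconj G x v) ->
  exists l, walk G M Delta a v l (gconj G x v) /\ label_prod G l = x.
Proof. induction n; intros x v Hx Hb Hv Hxv; destruct (classic (x = gone)) as [->|Hne];
  try (exists []; simpl; split; [gnorm|]; reflexivity).
  - exfalso. assert (length [x] <= 0)%nat; [|simpl in *; lia].
    apply Hb. intros y [<-|[]]; auto. simpl. apply gmul1r.
  - destruct (Hgcd x Delta Hx HD) as [s0 [Hs0 [Hs0x [Hs0D Hs0u]]]].
    pose proof (convex a v x s0 Hv Hxv Hx Hs0 Hs0x Hs0D Hs0u) as Hvs0.
    assert (Hs0ne : s0 <> gone).
    { destruct (Hgen x Hx) as [l [Hl El]].
      destruct (first_simple l Hl) as [s1 [y [Hs1 [Hs1D [Hs1ne [Hy Ey]]]]]]; [congruence|].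
      assert (ldivM G M s1 s0) as [c [Hc Ec]].
      { apply Hs0u; auto. exists y; split; auto; congruence. }
      intro E. rewrite E in Ec. symmetry in Ec. apply ginv_unique in Ec.
      apply Hs1ne, unit_triv; auto. congruence. }
    destruct HL as [L HLs].
    destruct (min_in_list L (fun t => Ssum_cand G M Delta a v t /\ P t x)) as
      [t [[[[HtM HtD] [Htne Htc]] Htx] Hmin]].
    { intros t [[[HtM HtD] _] _]. apply HLs; auto. apply ldiv_prec; auto. }
    { exists s0. apply ldiv_prec in Hs0D. apply ldiv_prec in Hs0x. exact (conj (conj (conj Hs0 Hs0D) (conj Hs0ne Hvs0)) Hs0x). }
    assert (HSs : Ssum G M Delta a v t).
    { split. exact (conj (conj HtM HtD) (conj Htne Htc)). intros t' Hc' Hp'. apply Hmin; [cbv beta; split; [exact Hc' | eapply prec_trans; eauto] | exact Hp']. }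
    assert (Ex : gconj G (ginv t ** x) (gconj G t v) = gconj G x v) by (gnorm; reflexivity).
    destruct (IHn (ginv t ** x) (gconj G t v)) as [l [Hw Hlab]]; auto.
    + intros l Hl Hp. assert (length (t :: l) <= S n)%nat; [|simpl in *; lia].
      apply Hb. intros y [<-|Hy]; auto. simpl. rewrite Hp. gnorm. reflexivity.
    + rewrite Ex; auto.
    + exists ((v, t, true) :: l). simpl. split.
      * split; [split; auto|]. split; auto. rewrite <- Ex; auto.
      * rewrite Hlab. gnorm. reflexivity. Qed.

Lemma walk_conj a : forall l x y, walk G M Delta a x l y ->
  x ** label_prod G l = label_prod G l ** y.
Proof. induction l as [|[[v s] eps] l IH]; simpl; intros x y Hw.
  - subst. rewrite gmul1l, gmul1r. reflexivity.
  - destruct Hw as [_ Hw]. destruct eps; destruct Hw as [-> Hw]; apply IH in Hw.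
    + rewrite <- gmulA, <- Hw. gnorm. reflexivity.
    + rewrite <- gmulA, <- Hw. gnorm. reflexivity. Qed.

Lemma walk_app a : forall l1 x y z l2, walk G M Delta a x l1 y -> walk G M Delta a y l2 z ->
  walk G M Delta a x (l1 ++ l2) z.
Proof. induction l1 as [|[[v s] eps] l IH]; simpl; intros x y z l2 H1 H2.
  - subst; auto.
  - destruct H1 as [Ha H1]. split; auto. destruct eps; destruct H1 as [-> H1]; split; eauto. Qed.

Lemma label_app l1 l2 : label_prod G (l1 ++ l2) = label_prod G l1 ** label_prod G l2.
Proof. induction l1 as [|[[v s] eps] l IH]; simpl.
  - rewrite gmul1l; auto.
  - rewrite IH, gmulA. reflexivity. Qed.

Lemma walk_rev a : forall l x y, walk G M Delta a x l y ->
  exists l', walk G M Delta a y l' x /\ label_prod G l' = ginv (label_prod G l).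
Proof. induction l as [|[[v s] eps] l IH]; simpl; intros x y Hw.
  - subst. exists []. simpl. rewrite ginv_one. auto.
  - destruct Hw as [Ha Hw]. destruct eps; destruct Hw as [-> Hw]; apply IH in Hw;
    destruct Hw as [l' [Hw' Hl']].
    + exists (l' ++ [(v, s, false)]). split.
      * eapply walk_app; eauto. simpl. auto.
      * rewrite label_app, Hl'. simpl. gnorm. reflexivity.
    + exists (l' ++ [(v, s, true)]). split.
      * eapply walk_app; eauto. simpl. auto.
      * rewrite label_app, Hl'. simpl. gnorm. reflexivity. Qed.

Lemma main_sec a a' : Csum G M Delta a a' ->
  forall c : G, image_p G M Delta a a' c <-> centralizer G a' c.
Proof. intros Ha' c. split.
  - intros [l [Hw ->]]. unfold centralizer. symmetry. eapply walk_conj; eauto.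
  - unfold centralizer. intro Hc. destruct (decomp c) as [k [m [Hm Ec]]].
    set (w := gconj G (ginv (Pw k)) a').
    assert (Hw : Csum G M Delta a w) by (apply Csum_conjD; auto).
    assert (E1 : gconj G (Pw k) w = a') by (unfold w; gnorm; reflexivity).
    assert (E2 : gconj G m w = a').
    { transitivity (gconj G c a'). rewrite Ec; unfold w; gnorm; reflexivity.
      unfold gconj. rewrite <- gmulA, <- Hc, gmulKl. reflexivity. }
    destruct (Hatom _ (M_gpow k)) as [N1 HN1].
    destruct (PL a N1 (Pw k) w (M_gpow k) HN1 Hw) as [l1 [Hw1 Hl1]]; [rewrite E1; auto|].
    rewrite E1 in Hw1. destruct (walk_rev a _ _ _ Hw1) as [l1' [Hw1' Hl1']].
    destruct (Hatom _ Hm) as [N2 HN2].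
    destruct (PL a N2 m w Hm HN2 Hw) as [l2 [Hw2 Hl2]]; [rewrite E2; auto|].
    rewrite E2 in Hw2. exists (l1' ++ l2). split.
    + eapply walk_app; eauto.
    + rewrite label_app, Hl1', Hl1, Hl2. auto. Qed.

End Garside.

Theorem theorem3p4 (G : group) (M : G -> Prop) (Delta : G)
  (HG : is_garside G M Delta) (a a' : G) (Ha' : Csum G M Delta a a') :
  forall c : G, image_p G M Delta a a' c <-> centralizer G a' c.
Proof.
  destruct HG as [H1 [H2 [H3 [H4 [H5 [H6 [H7 [H8 [H9 [H10 [H11 H12]]]]]]]]]]].
  eapply main_sec; eassumption.
Qed.
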